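(* Let $S$ be a training set of examples $(\mathbf{x},y)$ with $\mathbf{x}\in[-1,1]^d$, $y\in\{1,\dots,k\}$, let $\epsilon>0$, and let $W^\star\in\mathbb{R}^{k\times d}$ be an arbitrary matrix. Run ShareBoost on $S$ for $T=\left\lceil \frac{4}{\epsilon}\|W^\star\|_{\infty,1}^2\right\rceil$ iterations and let $W$ be the output matrix. Then $\|W\|_{\infty,0}\le T$ and $L(W)\le L(W^\star)+\epsilon$.
   Context: For $W\in\mathbb{R}^{k\times d}$, $W_{\cdot,i}$ denotes its $i$-th column; $\|W\|_{\infty,0}=|\{i:\|W_{\cdot,i}\|_\infty>0\}|$ is the number of nonzero columns and $\|W\|_{\infty,1}=\sum_{i=1}^d\|W_{\cdot,i}\|_\infty$. The loss of $W$ on $(\mathbf{x},y)$ is $\ell(W,(\mathbf{x},y))=\ln\sum_{y'\in\{1,\dots,k\}}\exp\big(\mathbf{1}[y'\neq y]-(W\mathbf{x})_y+(W\mathbf{x})_{y'}\big)$, and $L(W)=\frac1{|S|}\sum_{(\mathbf{x},y)\in S}\ell(W,(\mathbf{x},y))$. Write $\nabla_r L(W)\in\mathbb{R}^k$ for the $r$-th column of the gradient matrix $\nabla L(W)$. The ShareBoost algorithm: initialize $W=0$, $I=\emptyset$; for $t=1,\dots,T$: choose $r\in\{1,\dots,d\}$ maximizing $\|\nabla_r L(W)\|_1$ (ties broken arbitrarily), set $I\leftarrow I\cup\{r\}$, and set $W\leftarrow\arg\min\{L(V): V\in\mathbb{R}^{k\times d},\ V_{\cdot,i}=0\text{ for all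 }i\notin I\}$ (a minimizer is assumed to be attained at every iteration). *)

(* Defs.v *)
From Stdlib Require Import Reals Lra Lia List.
Import ListNotations.
Open Scope R_scope.

(* Matrices in R^{k x d}: functions row -> column -> R; only entries
   with row < k and column < d are ever used. Rows/labels are 0-based
   (label y in {1..k} of the paper is y-1 here), columns 0-based. *)
Definition mat := nat -> nat -> R.
Definition vec := nat -> R.

Fixpoint rsum (n : nat) (f : nat -> R) : R :=
  match n with O => 0 | S m => rsum m f + f m end.

(* max_{i < n} f i  (0 if n = 0; used on nonnegative quantities) *)
Fixpoint rmaxn (n : nat) (f : nat -> R) : R :=
  match n with O => 0 | S m => Rmax (rmaxn m f) (f m) end.

Fixpoint ncount (n : nat) (P : nat -> Prop) (dec : forall i, {P i} + {~ P i}) : nat :=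
  match n with O => O | S m => (ncount m P dec + if dec m then 1 else 0)%nat end.

Definition col_inf (k : nat) (W : mat) (i : nat) : R := rmaxn k (fun j => Rabs (W j i)).
Definition col_l1 (k : nat) (W : mat) (i : nat) : R := rsum k (fun j => Rabs (W j i)).

Definition norm_inf0 (k d : nat) (W : mat) : nat :=
  ncount d (fun i => 0 < col_inf k W i) (fun i => Rlt_dec 0 (col_inf k W i)).
Definition norm_inf1 (k d : nat) (W : mat) : R := rsum d (col_inf k W).

Definition matvec (d : nat) (W : mat) (x : vec) (j : nat) : R :=
  rsum d (fun i => W j i * x i).

Definition ind_neq (a b : nat) : R := if Nat.eqb a b then 0 else 1.

Definition loss (k d : nat) (W : mat) (ex : vec * nat) : R :=
  let (x, y) := ex in
  ln (rsum k (fun y' => exp (ind_neq y' y - matvec d W x y + matvec d W x y'))).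

Definition Lrisk (k d : nat) (S : list (vec * nat)) (W : mat) : R :=
  / INR (length S) * fold_right (fun ex acc => loss k d W ex + acc) 0 S.

Definition is_gradient (k d : nat) (F : mat -> R) (W : mat) (G : mat) : Prop :=
  forall j r, (j < k)%nat -> (r < d)%nat ->
    derivable_pt_lim
      (fun h => F (fun a b => W a b + (if andb (Nat.eqb a j) (Nat.eqb b r) then h else 0)))
      0 (G j r).

Definition supported_on (k d : nat) (I : nat -> Prop) (V : mat) : Prop :=
  forall j i, (j < k)%nat -> (i < d)%nat -> ~ I i -> V j i = 0.

(* W is a possible output of ShareBoost run for T iterations on S
   (ties broken arbitrarily, any minimizer allowed). *)
Definition shareboost_output (k d : nat) (S : list (vec * nat)) (T : nat) (W : mat) : Prop :=
  exists (Ws : nat -> mat) (Is : nat -> nat -> Prop) (rs : nat -> nat),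
    Ws O = (fun _ _ => 0) /\
    (forall i, ~ Is O i) /\
    (forall t, (t < T)%nat ->
       exists G, is_gradient k d (Lrisk k d S) (Ws t) G /\
         (rs t < d)%nat /\
         (forall r', (r' < d)%nat -> col_l1 k G r' <= col_l1 k G (rs t)) /\
         (forall i, Is (Datatypes.S t) i <-> (Is t i \/ i = rs t)) /\
         supported_on k d (Is (Datatypes.S t)) (Ws (Datatypes.S t)) /\
         (forall V, supported_on k d (Is (Datatypes.S t)) V ->
             Lrisk k d S (Ws (Datatypes.S t)) <= Lrisk k d S V)) /\
    W = Ws T.

(* ceiling of a real, as a natural number (0 for negative inputs) *)
Definition ceil_nat (x : R) : nat := Z.to_nat (1 - up (- x)).

(* Main.v *)
Require Import Defs.
From Stdlib Require Import Reals List Lra Lia ZArith Classical FunctionalExtensionality.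
From Coquelicot Require Import Coquelicot.
Open Scope R_scope.

Lemma exp_quad (z : R) : z <= 1 -> exp z <= 1 + z + z * z.
Proof.
  intro Hz.
  set (f := fun z => (1 + z + z*z) * exp (- z)).
  assert (Hd : forall c, derivable_pt_lim f c (c * (1 - c) * exp (- c))).
  { intro c. apply is_derive_Reals. unfold f. auto_derive; auto. ring. }
  assert (Hf : 1 <= f z).
  { assert (f0 : f 0 = 1) by (unfold f; rewrite Ropp_0, exp_0; ring).
    destruct (Rtotal_order z 0) as [Hlt|[Heq|Hgt]].
    - destruct (MVT_cor2 f (fun c => c * (1 - c) * exp (- c)) z 0 Hlt (fun c _ => Hd c))
        as [c [Hc1 Hc2]].
      assert (0 < exp (- c)) by apply exp_pos.
      assert (c * (1 - c) * exp (- c) <= 0).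
      { assert (c * (1-c) <= 0) by nra. nra. }
      nra.
    - subst. lra.
    - destruct (MVT_cor2 f (fun c => c * (1 - c) * exp (- c)) 0 z Hgt (fun c _ => Hd c))
        as [c [Hc1 Hc2]].
      assert (0 < exp (- c)) by apply exp_pos.
      assert (0 <= c * (1 - c) * exp (- c)).
      { assert (0 <= c * (1-c)) by nra. nra. }
      nra. }
  unfold f in Hf.
  assert (exp z * exp (- z) = 1) by (rewrite <- exp_plus; replace (z + - z) with 0 by ring; apply exp_0).
  assert (0 < exp z) by apply exp_pos.
  nra.
Qed.

Lemma rsum_ext n f g : (forall i, (i < n)%nat -> f i = g i) -> rsum n f = rsum n g.
Proof. induction n; intro H; simpl; auto. rewrite IHn by (intros; apply H; lia). rewrite H by lia. auto. Qed.

Lemma rsum_le n f g : (forall i, (i < n)%nat -> f i <= g i) -> rsum n f <= rsum n g.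
Proof. induction n; intro H; simpl; [lra|]. assert (H1 := H n ltac:(lia)). assert (rsum n f <= rsum n g) by (apply IHn; intros; apply H; lia). lra. Qed.

Lemma rsum_plus n f g : rsum n (fun i => f i + g i) = rsum n f + rsum n g.
Proof. induction n; simpl; [ring|]. rewrite IHn. ring. Qed.

Lemma rsum_minus n f g : rsum n (fun i => f i - g i) = rsum n f - rsum n g.
Proof. induction n; simpl; [ring|]. rewrite IHn. ring. Qed.

Lemma rsum_scal n c f : rsum n (fun i => c * f i) = c * rsum n f.
Proof. induction n; simpl; [ring|]. rewrite IHn. ring. Qed.

Lemma rsum_zero n f : (forall i, (i < n)%nat -> f i = 0) -> rsum n f = 0.
Proof. intro H. rewrite (rsum_ext n f (fun _ => 0)) by auto. clear H. induction n; simpl; [auto|]. rewrite IHn; ring. Qed.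

Lemma rsum_swap n m (f : nat -> nat -> R) :
  rsum n (fun i => rsum m (fun j => f i j)) = rsum m (fun j => rsum n (fun i => f i j)).
Proof.
  induction n; simpl.
  - symmetry; apply rsum_zero; auto.
  - rewrite IHn. rewrite <- rsum_plus. auto.
Qed.

Lemma rsum_delta n r f : (r < n)%nat -> rsum n (fun i => if Nat.eqb i r then f i else 0) = f r.
Proof.
  induction n; intro H; [lia|]. simpl.
  destruct (Nat.eq_dec r n).
  - subst. rewrite Nat.eqb_refl. rewrite rsum_zero. ring.
    intros i Hi. destruct (Nat.eqb_spec i n); [lia|auto].
  - rewrite IHn by lia. destruct (Nat.eqb_spec n r); [lia|ring].
Qed.

Lemma rsum_nonneg n f : (forall i, (i < n)%nat -> 0 <= f i) -> 0 <= rsum n f.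
Proof. intro H. rewrite <- (rsum_zero n (fun _ => 0)) by auto. apply rsum_le. auto. Qed.

Lemma rsum_pos n f : (0 < n)%nat -> (forall i, (i < n)%nat -> 0 < f i) -> 0 < rsum n f.
Proof.
  intros Hn H. destruct n; [lia|]. simpl.
  assert (0 <= rsum n f) by (apply rsum_nonneg; intros; left; apply H; lia).
  assert (0 < f n) by (apply H; lia). lra.
Qed.

Lemma rsum_abs n f : Rabs (rsum n f) <= rsum n (fun i => Rabs (f i)).
Proof. induction n; simpl. rewrite Rabs_R0; lra. eapply Rle_trans; [apply Rabs_triang|]. lra. Qed.

Lemma rmaxn_ge n f j : (j < n)%nat -> f j <= rmaxn n f.
Proof.
  induction n; intro H; [lia|]. simpl.
  destruct (Nat.eq_dec j n). subst. apply Rmax_r.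
  eapply Rle_trans; [apply IHn; lia| apply Rmax_l].
Qed.

Lemma rmaxn_nonneg n f : 0 <= rmaxn n f.
Proof. induction n; simpl; [lra|]. eapply Rle_trans; [apply IHn|apply Rmax_l]. Qed.

Lemma rmaxn_zero n f : (forall i, (i < n)%nat -> f i = 0) -> rmaxn n f = 0.
Proof.
  induction n; intro H; simpl; auto. rewrite IHn by (intros; apply H; lia).
  rewrite H by lia. unfold Rmax. destruct Rle_dec; auto.
Qed.

Lemma rsum_ind k y f : (y < k)%nat -> rsum k (fun j => (1 - ind_neq j y) * f j) = f y.
Proof.
  intro H. rewrite <- (rsum_delta k y f H). apply rsum_ext. intros i _.
  unfold ind_neq. destruct (Nat.eqb i y); ring.
Qed.

Definition madd (W D : mat) : mat := fun a b => W a b + D a b.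

Lemma matvec_add d W D x j : matvec d (madd W D) x j = matvec d W x j + matvec d D x j.
Proof. unfold matvec, madd. rewrite <- rsum_plus. apply rsum_ext. intros; ring. Qed.

Lemma fold_plus {A} (l : list A) (f g : A -> R) :
  fold_right (fun e acc => f e + g e + acc) 0 l =
  fold_right (fun e acc => f e + acc) 0 l + fold_right (fun e acc => g e + acc) 0 l.
Proof. induction l; simpl; [ring|]. rewrite IHl. ring. Qed.

Lemma fold_le {A} (l : list A) (f g : A -> R) :
  (forall e, In e l -> f e <= g e) ->
  fold_right (fun e acc => f e + acc) 0 l <= fold_right (fun e acc => g e + acc) 0 l.
Proof. induction l; simpl; intro H; [lra|]. assert (f a <= g a) by auto.
  assert (fold_right (fun e acc => f e + acc) 0 l <= fold_right (fun e acc => g e + acc) 0 l) by auto. lra. Qed.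

Lemma fold_const {A} (l : list A) c : fold_right (fun (e:A) acc => c + acc) 0 l = INR (length l) * c.
Proof. induction l; simpl fold_right; simpl length; [simpl; ring|]. rewrite IHl, S_INR. ring. Qed.

Lemma fold_abs {A} (l : list A) f :
  Rabs (fold_right (fun e acc => f e + acc) 0 l) <= fold_right (fun e acc => Rabs (f e) + acc) 0 l.
Proof. induction l; simpl. rewrite Rabs_R0; lra. eapply Rle_trans; [apply Rabs_triang|]. lra. Qed.

Lemma rsum_fold {A} (l : list A) n (f : A -> nat -> R) :
  rsum n (fun j => fold_right (fun e acc => f e j + acc) 0 l) =
  fold_right (fun e acc => rsum n (f e) + acc) 0 l.
Proof. induction l; simpl. apply rsum_zero; auto. rewrite rsum_plus. rewrite IHl. auto. Qed.

Lemma fold_scal {A} (l : list A) c f :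
  fold_right (fun e acc => c * f e + acc) 0 l = c * fold_right (fun e acc => f e + acc) 0 l.
Proof. induction l; simpl; [ring|]. rewrite IHl; ring. Qed.

Lemma Rabs_le_both x c : Rabs x <= c -> - c <= x <= c.
Proof. unfold Rabs; destruct Rcase_abs; intros; lra. Qed.

Lemma fold_scal_r {A} (l : list A) c f :
  fold_right (fun e acc => f e * c + acc) 0 l = fold_right (fun e acc => f e + acc) 0 l * c.
Proof. induction l; simpl; [ring|]. rewrite IHl; ring. Qed.

Lemma sum_p n a : 0 < rsum n (fun j => exp (a j)) ->
  rsum n (fun j => exp (a j) / rsum n (fun j => exp (a j))) = 1.
Proof.
  intro HZ. set (Z := rsum n (fun j => exp (a j))) in *.
  rewrite (rsum_ext _ _ (fun j => / Z * exp (a j))) by (intros; unfold Rdiv; ring).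
  rewrite rsum_scal. fold Z. field. lra.
Qed.

Lemma lse_lower n a b : 0 < rsum n (fun j => exp (a j)) ->
  ln (rsum n (fun j => exp (a j))) + rsum n (fun j => exp (a j) / rsum n (fun j => exp (a j)) * b j)
  <= ln (rsum n (fun j => exp (a j + b j))).
Proof.
  intro HZ. set (Z := rsum n (fun j => exp (a j))) in *.
  set (m := rsum n (fun j => exp (a j) / Z * b j)).
  assert (Hm : rsum n (fun j => exp (a j) * b j) = Z * m).
  { unfold m. rewrite (rsum_ext _ (fun j => exp (a j) / Z * b j) (fun j => / Z * (exp (a j) * b j)))
      by (intros; unfold Rdiv; ring). rewrite rsum_scal. field. lra. }
  assert (H : exp m * Z <= rsum n (fun j => exp (a j + b j))).
  { apply Rle_trans with (rsum n (fun j => exp (a j) * (exp m * (1 + (b j - m))))).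
    - rewrite (rsum_ext _ _ (fun j => exp m * exp (a j) + (exp m * (exp (a j) * b j) - (exp m * m) * exp (a j))))
        by (intros; ring).
      rewrite rsum_plus, rsum_minus, !rsum_scal, Hm. fold Z. lra.
    - apply rsum_le. intros i _. rewrite exp_plus.
      apply Rmult_le_compat_l; [left; apply exp_pos|].
      replace (exp (b i)) with (exp m * exp (b i - m)) by (rewrite <- exp_plus; f_equal; ring).
      apply Rmult_le_compat_l; [left; apply exp_pos|]. apply exp_ineq1_le. }
  assert (0 < exp m) by apply exp_pos.
  apply ln_le in H; [|nra]. rewrite ln_mult in H by lra. rewrite ln_exp in H. lra.
Qed.

Lemma ln_le_x u : 0 < 1 + u -> ln (1 + u) <= u.
Proof. intro H. rewrite <- (ln_exp u) at 2. apply ln_le; auto. apply exp_ineq1_le. Qed.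

Lemma lse_upper n a w w0 c : 0 < rsum n (fun j => exp (a j)) ->
  (forall j, (j < n)%nat -> Rabs (w j) <= c) -> c <= 1 ->
  ln (rsum n (fun j => exp (a j + (w j - w0))))
  <= ln (rsum n (fun j => exp (a j))) + rsum n (fun j => exp (a j) / rsum n (fun j => exp (a j)) * (w j - w0)) + c * c.
Proof.
  intros HZ Hw Hc. set (Z := rsum n (fun j => exp (a j))) in *.
  assert (HP := sum_p n a HZ). fold Z in HP.
  set (m := rsum n (fun j => exp (a j) / Z * w j)).
  assert (Hm : rsum n (fun j => exp (a j) * w j) = Z * m).
  { unfold m. rewrite (rsum_ext _ (fun j => exp (a j) / Z * w j) (fun j => / Z * (exp (a j) * w j)))
      by (intros; unfold Rdiv; ring). rewrite rsum_scal. field. lra. }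
  assert (Hm2 : rsum n (fun j => exp (a j) / Z * (w j - w0)) = m - w0).
  { rewrite (rsum_ext _ _ (fun j => exp (a j) / Z * w j - w0 * (exp (a j) / Z))) by (intros; ring).
    rewrite rsum_minus, rsum_scal, HP. fold m. ring. }
  rewrite Hm2.
  assert (c0 : 0 <= c).
  { destruct n. unfold Z in HZ; simpl in HZ; lra. assert (H0 := Hw 0%nat ltac:(lia)). pose proof (Rabs_pos (w 0%nat)). lra. }
  assert (Hmlow : - c <= m).
  { unfold m. replace (- c) with (rsum n (fun j => exp (a j) / Z * (- c))).
    - apply rsum_le. intros i Hi. apply Rmult_le_compat_l.
      + unfold Rdiv. apply Rmult_le_pos; [left; apply exp_pos| left; apply Rinv_0_lt_compat; auto].
      + assert (H1 := Hw i Hi). apply Rabs_le_both in H1. lra.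
    - rewrite (rsum_ext _ _ (fun j => (-c) * (exp (a j) / Z))) by (intros; ring). rewrite rsum_scal, HP. ring. }
  assert (H : rsum n (fun j => exp (a j + (w j - w0))) <= exp (- w0) * (Z * (1 + m + c * c))).
  { apply Rle_trans with (rsum n (fun j => exp (- w0) * (exp (a j) * (1 + w j + c * c)))).
    - apply rsum_le. intros i Hi.
      replace (a i + (w i - w0)) with (- w0 + (a i + w i)) by ring. rewrite !exp_plus.
      apply Rmult_le_compat_l; [left; apply exp_pos|].
      apply Rmult_le_compat_l; [left; apply exp_pos|].
      assert (H1 := Hw i Hi). apply Rabs_le_both in H1.
      eapply Rle_trans; [apply exp_quad; lra|]. nra.
    - rewrite rsum_scal. apply Rmult_le_compat_l; [left; apply exp_pos|].
      rewrite (rsum_ext _ _ (fun j => (1 + c * c) * exp (a j) + exp (a j) * w j)) by (intros; ring).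
      rewrite rsum_plus, rsum_scal, Hm. fold Z. lra. }
  assert (0 < 1 + m + c * c) by nra.
  assert (0 < exp (- w0)) by apply exp_pos.
  assert (0 < rsum n (fun j => exp (a j + (w j - w0)))).
  { destruct n. unfold Z in HZ; simpl in HZ; lra. apply rsum_pos; [lia|]. intros; apply exp_pos. }
  apply ln_le in H; auto.
  rewrite !ln_mult in H by nra. rewrite ln_exp in H.
  assert (ln (1 + m + c * c) <= m + c * c) by (replace (1 + m + c*c) with (1 + (m + c*c)) by ring; apply ln_le_x; lra).
  lra.
Qed.

Definition scr d (W : mat) (x : vec) y j := ind_neq j y - matvec d W x y + matvec d W x j.
Definition Zs k d W x y := rsum k (fun j => exp (scr d W x y j)).
Definition gex k d W x y j i := x i * (exp (scr d W x y j) / Zs k d W x y - (1 - ind_neq j y)).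
Definition inner k d (G D : mat) := rsum k (fun j => rsum d (fun i => G j i * D j i)).

Lemma Zs_pos k d W x y : (y < k)%nat -> 0 < Zs k d W x y.
Proof. intro. apply rsum_pos; [lia|]. intros; apply exp_pos. Qed.

Lemma key_inner k d W x y D : (y < k)%nat ->
  rsum k (fun j => exp (scr d W x y j) / Zs k d W x y * (matvec d D x j - matvec d D x y))
  = inner k d (gex k d W x y) D.
Proof.
  intro Hy. unfold inner, gex.
  set (Z := Zs k d W x y). set (p := fun j => exp (scr d W x y j) / Z).
  rewrite (rsum_ext k (fun j => rsum d _) (fun j => (p j - (1 - ind_neq j y)) * matvec d D x j)).
  2:{ intros j _. unfold matvec. rewrite <- rsum_scal. apply rsum_ext. intros; unfold p; ring. }
  rewrite (rsum_ext k (fun j => (p j - (1 - ind_neq j y)) * matvec d D x j) (fun j => p j * matvec d D x j - (1 - ind_neq j y) * matvec d D x j)) by (intros; ring).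
  rewrite rsum_minus, rsum_ind by auto.
  rewrite (rsum_ext k (fun j => exp (scr d W x y j) / Z * (matvec d D x j - matvec d D x y)) (fun j => p j * matvec d D x j - matvec d D x y * p j)) by (intros; unfold p; ring).
  rewrite rsum_minus, rsum_scal. unfold p, Z, Zs. rewrite sum_p. ring.
  apply (Zs_pos k d W x y Hy).
Qed.

Lemma loss_madd k d W D x y :
  loss k d (madd W D) (x, y) =
  ln (rsum k (fun j => exp (scr d W x y j + (matvec d D x j - matvec d D x y)))).
Proof.
  simpl. f_equal. apply rsum_ext. intros. f_equal. rewrite !matvec_add. unfold scr. ring.
Qed.

Lemma loss_lower k d W D x y : (y < k)%nat ->
  loss k d W (x, y) + inner k d (gex k d W x y) D <= loss k d (madd W D) (x, y).
Proof.
  intro Hy. rewrite loss_madd, <- key_inner by auto.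
  apply (lse_lower k (scr d W x y) (fun j => matvec d D x j - matvec d D x y)).
  apply (Zs_pos k d W x y Hy).
Qed.

Lemma loss_upper k d W D x y c : (y < k)%nat ->
  (forall j, (j < k)%nat -> Rabs (matvec d D x j) <= c) -> c <= 1 ->
  loss k d (madd W D) (x, y) <= loss k d W (x, y) + inner k d (gex k d W x y) D + c * c.
Proof.
  intros Hy Hw Hc. rewrite loss_madd, <- key_inner by auto.
  apply (lse_upper k (scr d W x y) (fun j => matvec d D x j) (matvec d D x y) c); auto.
  apply (Zs_pos k d W x y Hy).
Qed.

Definition Gf k d (S : list (vec * nat)) W j i :=
  / INR (length S) * fold_right (fun ex acc => gex k d W (fst ex) (snd ex) j i + acc) 0 S.

Lemma inv_INR_nonneg n : 0 <= / INR n.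
Proof. destruct n. simpl. rewrite Rinv_0; lra. left; apply Rinv_0_lt_compat, lt_0_INR; lia. Qed.

Lemma inv_n_n n c : 0 <= c -> / INR n * (INR n * c) <= c.
Proof. intro. destruct n. simpl. rewrite Rinv_0; lra.
  assert (0 < INR (S n)) by (apply lt_0_INR; lia). rewrite <- Rmult_assoc, Rinv_l by lra. lra. Qed.

Lemma inner_Gf k d S W D : inner k d (Gf k d S W) D =
  / INR (length S) * fold_right (fun ex acc => inner k d (gex k d W (fst ex) (snd ex)) D + acc) 0 S.
Proof.
  unfold inner, Gf.
  rewrite (rsum_ext k _ (fun j => / INR (length S) * fold_right (fun ex acc =>
     rsum d (fun i => gex k d W (fst ex) (snd ex) j i * D j i) + acc) 0 S)).
  - rewrite rsum_scal. f_equal. apply rsum_fold.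
  - intros j _. rewrite <- rsum_fold, <- rsum_scal. apply rsum_ext. intros i _.
    rewrite Rmult_assoc. f_equal. symmetry. apply (fold_scal_r S (D j i) (fun ex => gex k d W (fst ex) (snd ex) j i)).
Qed.

Lemma Lrisk_lower k d S W D : (forall ex, In ex S -> (snd ex < k)%nat) ->
  Lrisk k d S W + inner k d (Gf k d S W) D <= Lrisk k d S (madd W D).
Proof.
  intro HS. unfold Lrisk. rewrite inner_Gf, <- Rmult_plus_distr_l.
  apply Rmult_le_compat_l; [apply inv_INR_nonneg|].
  rewrite <- fold_plus. apply fold_le. intros [x y] Hin. apply loss_lower. apply (HS _ Hin).
Qed.

Lemma Lrisk_upper k d S W D c :
  (forall ex, In ex S -> (snd ex < k)%nat /\ forall j, (j < k)%nat -> Rabs (matvec d D (fst ex) j) <= c) ->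
  0 <= c -> c <= 1 ->
  Lrisk k d S (madd W D) <= Lrisk k d S W + inner k d (Gf k d S W) D + c * c.
Proof.
  intros HS Hc0 Hc1. unfold Lrisk. rewrite inner_Gf.
  apply Rle_trans with (/ INR (length S) * (fold_right (fun ex acc => loss k d W ex + acc) 0 S
     + fold_right (fun ex acc => inner k d (gex k d W (fst ex) (snd ex)) D + acc) 0 S
     + INR (length S) * (c * c))).
  - apply Rmult_le_compat_l; [apply inv_INR_nonneg|].
    rewrite <- fold_plus, <- fold_const, <- fold_plus. apply fold_le.
    intros [x y] Hin. destruct (HS _ Hin) as [H1 H2]. apply loss_upper; auto.
  - rewrite !Rmult_plus_distr_l. assert (H := inv_n_n (length S) (c * c) ltac:(nra)). lra.
Qed.

Lemma Gf_bound k d S W r : (r < d)%nat ->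
  (forall ex, In ex S -> (snd ex < k)%nat /\ forall i, (i < d)%nat -> -1 <= fst ex i <= 1) ->
  col_l1 k (Gf k d S W) r <= 2.
Proof.
  intros Hr HS. unfold col_l1, Gf.
  apply Rle_trans with (rsum k (fun j => / INR (length S) *
      fold_right (fun ex acc => Rabs (gex k d W (fst ex) (snd ex) j r) + acc) 0 S)).
  - apply rsum_le. intros j _. rewrite Rabs_mult, (Rabs_right (/ _)) by (apply Rle_ge, inv_INR_nonneg).
    apply Rmult_le_compat_l; [apply inv_INR_nonneg|]. apply fold_abs.
  - rewrite rsum_scal, rsum_fold.
    apply Rle_trans with (/ INR (length S) * (INR (length S) * 2)); [|apply inv_n_n; lra].
    apply Rmult_le_compat_l; [apply inv_INR_nonneg|]. rewrite <- fold_const. apply fold_le.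
    intros [x y] Hin. destruct (HS _ Hin) as [Hy Hx]. simpl in Hy, Hx. simpl.
    unfold gex.
    apply Rle_trans with (rsum k (fun j => exp (scr d W x y j) / Zs k d W x y + (1 - ind_neq j y) * 1)).
    + apply rsum_le. intros j _. rewrite Rabs_mult.
      assert (Rabs (x r) <= 1) by (apply Rabs_le; apply Hx; auto).
      assert (0 <= exp (scr d W x y j) / Zs k d W x y).
      { unfold Rdiv. apply Rmult_le_pos; [left; apply exp_pos| left; apply Rinv_0_lt_compat, Zs_pos; auto]. }
      assert (0 <= 1 - ind_neq j y <= 1) by (unfold ind_neq; destruct Nat.eqb; lra).
      assert (Rabs (exp (scr d W x y j) / Zs k d W x y - (1 - ind_neq j y)) <=
              exp (scr d W x y j) / Zs k d W x y + (1 - ind_neq j y) * 1).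
      { apply Rabs_le. lra. }
      pose proof (Rabs_pos (x r)). pose proof (Rabs_pos (exp (scr d W x y j) / Zs k d W x y - (1 - ind_neq j y))).
      nra.
    + rewrite rsum_plus, rsum_ind by auto. unfold Zs. rewrite sum_p. lra.
      apply (Zs_pos k d W x y Hy).
Qed.

Lemma col_inf_nonneg k W i : 0 <= col_inf k W i.
Proof. apply rmaxn_nonneg. Qed.

Lemma inner_bound k d G D M : (forall r, (r < d)%nat -> col_l1 k G r <= M) ->
  Rabs (inner k d G D) <= M * norm_inf1 k d D.
Proof.
  intro HM. unfold inner. rewrite rsum_swap.
  eapply Rle_trans; [apply rsum_abs|]. unfold norm_inf1. rewrite <- rsum_scal.
  apply rsum_le. intros i Hi. eapply Rle_trans; [apply rsum_abs|].
  apply Rle_trans with (col_l1 k G i * col_inf k D i).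
  - unfold col_l1. rewrite Rmult_comm, <- rsum_scal. apply rsum_le. intros j Hj.
    rewrite Rabs_mult.
    assert (Rabs (D j i) <= col_inf k D i) by (unfold col_inf; apply (rmaxn_ge k (fun j => Rabs (D j i))); auto).
    pose proof (Rabs_pos (G j i)). nra.
  - apply Rmult_le_compat_r; [apply col_inf_nonneg| auto].
Qed.

Definition Emat (j r : nat) (h : R) : mat := fun a b => if andb (Nat.eqb a j) (Nat.eqb b r) then h else 0.

Lemma inner_E k d G j r h : (j < k)%nat -> (r < d)%nat -> inner k d G (Emat j r h) = G j r * h.
Proof.
  intros Hj Hr. unfold inner, Emat.
  rewrite (rsum_ext k _ (fun a => if Nat.eqb a j then G a r * h else 0)).
  - apply rsum_delta; auto.
  - intros a _. destruct (Nat.eqb a j).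
    + simpl. rewrite <- (rsum_delta d r (fun b => G a b * h) Hr). apply rsum_ext. intros b _.
      destruct (Nat.eqb b r); ring.
    + simpl. apply rsum_zero. intros; ring.
Qed.

Lemma matvec_E d j r h x a : (r < d)%nat -> Rabs (x r) <= 1 -> Rabs (matvec d (Emat j r h) x a) <= Rabs h.
Proof.
  intros Hr Hx. unfold matvec, Emat. destruct (Nat.eqb a j); simpl.
  - rewrite (rsum_ext d _ (fun b => if Nat.eqb b r then h * x b else 0)).
    + rewrite rsum_delta by auto. rewrite Rabs_mult.
      pose proof (Rabs_pos h). nra.
    + intros b _. destruct (Nat.eqb b r); ring.
  - rewrite rsum_zero. rewrite Rabs_R0. apply Rabs_pos. intros; ring.
Qed.

Definition Dcol (r : nat) (v : nat -> R) : mat := fun a b => if Nat.eqb b r then v a else 0.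

Lemma inner_Dcol k d G r v : (r < d)%nat -> inner k d G (Dcol r v) = rsum k (fun a => G a r * v a).
Proof.
  intro Hr. unfold inner, Dcol. apply rsum_ext. intros a _.
  rewrite <- (rsum_delta d r (fun b => G a b * v a) Hr). apply rsum_ext. intros b _.
  destruct (Nat.eqb b r); ring.
Qed.

Lemma matvec_Dcol d r v x a : (r < d)%nat -> matvec d (Dcol r v) x a = v a * x r.
Proof.
  intro Hr. unfold matvec, Dcol.
  rewrite <- (rsum_delta d r (fun b => v a * x b) Hr). apply rsum_ext. intros b _.
  destruct (Nat.eqb b r); ring.
Qed.

Lemma Lrisk_ext k d S W W' : (forall a b, W a b = W' a b) -> Lrisk k d S W = Lrisk k d S W'.
Proof.
  intro H. assert (W = W') by (apply functional_extensionality; intro a; apply functional_extensionality; auto).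
  subst; auto.
Qed.

Lemma deriv_sandwich (phi : R -> R) G g :
  derivable_pt_lim phi 0 G ->
  (forall h, 0 < h <= 1 -> h * g <= phi h - phi 0 <= h * g + h * h) -> G = g.
Proof.
  intros HD Hs. destruct (Req_dec G g) as [|Hne]; auto. exfalso.
  set (e := Rabs (G - g) / 2).
  assert (He : 0 < e) by (unfold e; assert (0 < Rabs (G - g)) by (apply Rabs_pos_lt; lra); lra).
  destruct (HD e He) as [dl Hdl].
  set (h := Rmin (dl / 2) (Rmin (e / 2) 1)).
  assert (Hdp := cond_pos dl).
  assert (Hh0 : 0 < h) by (unfold h; repeat apply Rmin_pos; lra).
  assert (Hh1 : h <= dl / 2) by apply Rmin_l.
  assert (Hh2 : h <= e / 2) by (unfold h; eapply Rle_trans; [apply Rmin_r| apply Rmin_l]).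
  assert (Hh3 : h <= 1) by (unfold h; eapply Rle_trans; [apply Rmin_r| apply Rmin_r]).
  assert (Hq := Hdl h ltac:(lra) ltac:(rewrite Rabs_right; lra)).
  rewrite Rplus_0_l in Hq.
  destruct (Hs h ltac:(lra)) as [H1 H2].
  set (q := (phi h - phi 0) / h) in *.
  assert (Hq1 : g <= q <= g + h).
  { unfold q. split.
    - apply Rmult_le_reg_r with h; auto. unfold Rdiv. rewrite Rmult_assoc, Rinv_l by lra. lra.
    - apply Rmult_le_reg_r with h; auto. unfold Rdiv. rewrite Rmult_assoc, Rinv_l by lra. lra. }
  apply Rabs_def2 in Hq.
  assert (HE: Rabs (G - g) = 2 * e) by (unfold e; field).
  destruct (Rcase_abs (G - g)) as [Hn|Hp]; [rewrite Rabs_left in HE by auto | rewrite Rabs_right in HE by auto]; lra.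
Qed.

Lemma foc_alg g : (forall h, -1 <= h <= 1 -> 0 <= h * g + h * h) -> g = 0.
Proof.
  intro H. destruct (Req_dec g 0) as [|Hne]; auto. exfalso.
  set (s := Rmin 1 (Rabs g / 2)).
  assert (Hg : 0 < Rabs g) by (apply Rabs_pos_lt; auto).
  assert (0 < s) by (unfold s; apply Rmin_pos; lra).
  assert (s <= 1) by apply Rmin_l.
  assert (s <= Rabs g / 2) by apply Rmin_r.
  assert (Hs1 := H s ltac:(lra)). assert (Hs2 := H (- s) ltac:(lra)).
  unfold Rabs in *. destruct Rcase_abs; nra.
Qed.

Lemma ncount_split n P Q R dP dQ dR : (forall i, (i < n)%nat -> P i -> Q i \/ R i) ->
  (ncount n P dP <= ncount n Q dQ + ncount n R dR)%nat.
Proof.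
  induction n; intro H; simpl; [lia|].
  assert (IH := IHn ltac:(intros; apply H; auto; lia)).
  destruct (dP n) as [Hp|Hp]; destruct (dQ n); destruct (dR n); try lia.
  exfalso. destruct (H n ltac:(lia) Hp); auto.
Qed.

Lemma ncount_eq n v : ncount n (fun i => i = v) (fun i => Nat.eq_dec i v) = (if Nat.ltb v n then 1 else 0)%nat.
Proof.
  induction n; simpl; auto. rewrite IHn.
  destruct (Nat.eq_dec n v); destruct (Nat.ltb_spec v n); destruct (Nat.ltb_spec v (S n)); lia.
Qed.

Lemma ncount_zero n P dP : (forall i, (i < n)%nat -> ~ P i) -> ncount n P dP = 0%nat.
Proof.
  induction n; intro H; simpl; auto. rewrite IHn by (intros; apply H; lia).
  destruct (dP n); auto. exfalso; apply (H n); auto.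
Qed.

Lemma count_bound T : forall n P dP (f : nat -> nat),
  (forall i, (i < n)%nat -> P i -> exists s, (s < T)%nat /\ f s = i) -> (ncount n P dP <= T)%nat.
Proof.
  induction T; intros n P dP f H.
  - rewrite ncount_zero; auto. intros i Hi Hp. destruct (H i Hi Hp) as [s [Hs _]]. lia.
  - set (P' := fun i => P i /\ i <> f T).
    assert (dP' : forall i, {P' i} + {~ P' i}).
    { intro i. unfold P'. destruct (dP i); destruct (Nat.eq_dec i (f T)); [right|left|right|right]; tauto. }
    assert (H1 := ncount_split n P P' (fun i => i = f T) dP dP' (fun i => Nat.eq_dec i (f T))
                 ltac:(intros i _ Hp; unfold P'; destruct (Nat.eq_dec i (f T)); tauto)).
    assert (H2 := IHT n P' dP' f ltac:(intros i Hi [Hp Hne]; destruct (H i Hi Hp) as [s [Hs Hf]];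
                 exists s; split; auto; destruct (Nat.eq_dec s T); [subst; congruence| lia])).
    rewrite ncount_eq in H1. destruct (Nat.ltb (f T) n); lia.
Qed.

Lemma ceil_ge x : x <= INR (ceil_nat x).
Proof.
  unfold ceil_nat. destruct (archimed (- x)) as [H1 H2].
  destruct (Z_le_gt_dec 0 (1 - up (- x))) as [Hz|Hz].
  - rewrite INR_IZR_INZ, Z2Nat.id by auto. rewrite minus_IZR. simpl. lra.
  - apply Z.gt_lt in Hz. apply IZR_lt in Hz. rewrite minus_IZR in Hz. simpl in Hz.
    pose proof (pos_INR (Z.to_nat (1 - up (- x)))). lra.
Qed.

Lemma recur (a : nat -> R) (B : R) (T : nat) : 0 <= B ->
  (forall t, (t < T)%nat -> exists M, 0 <= M /\ a t <= M * B /\ a (S t) <= a t - M * M / 4) ->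
  forall t, (t <= T)%nat -> INR t * a t <= 4 * (B * B).
Proof.
  intros HB H. induction t; intro Ht.
  - simpl. nra.
  - assert (IH := IHt ltac:(lia)). destruct (H t ltac:(lia)) as [M [HM0 [HM1 HM2]]].
    rewrite S_INR. pose proof (pos_INR t).
    destruct (Rle_lt_dec (a (S t)) 0) as [Hn|Hp]; [nra|].
    set (K := 4 * (B * B)). set (u := a t). set (v := a (S t)) in *. fold u in HM1, HM2, IH.
    fold K in IH.
    assert (Hu : 0 < u) by nra.
    assert (HBp : 0 < B) by nra.
    assert (Hsq : u * u <= M * B * (M * B)) by nra.
    assert (HvK : v * K <= u * K - u * u) by (unfold K; nra).
    assert (HK : 0 < K) by (unfold K; nra).
    assert (Hu2 : u < K) by nra.
    assert (Hmain : (INR t + 1) * (u * K - u * u) <= K * K).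
    { assert (Hp0 : 0 <= (K - INR t * u) * (K - u)) by (apply Rmult_le_pos; lra).
      assert (0 <= u * u) by nra.
      replace ((INR t + 1) * (u * K - u * u)) with (K * K - u * u - (K - INR t * u) * (K - u)) by ring.
      lra. }
    assert ((INR t + 1) * v * K <= K * K) by nra.
    apply Rmult_le_reg_r with K; auto.
Qed.

Definition sgn (x : R) : R := if Rle_dec 0 x then 1 else -1.
Lemma sgn_mul x : x * sgn x = Rabs x.
Proof. unfold sgn, Rabs. destruct Rle_dec; destruct Rcase_abs; lra. Qed.
Lemma sgn_abs x : Rabs (sgn x) = 1.
Proof. unfold sgn. destruct Rle_dec; [apply Rabs_R1| rewrite Rabs_left by lra; lra]. Qed.

Theorem theorem2 (k d : nat) (S : list (vec * nat)) (eps : R) (Wstar W : mat) :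
  (forall ex, In ex S ->
     (snd ex < k)%nat /\ (forall i, (i < d)%nat -> -1 <= fst ex i <= 1)) ->
  0 < eps ->
  shareboost_output k d S (ceil_nat (4 / eps * (norm_inf1 k d Wstar) ^ 2)) W ->
  (norm_inf0 k d W <= ceil_nat (4 / eps * (norm_inf1 k d Wstar) ^ 2))%nat /\
  Lrisk k d S W <= Lrisk k d S Wstar + eps.
Proof.
  intros HS Heps Hout.
  set (T := ceil_nat (4 / eps * (norm_inf1 k d Wstar) ^ 2)) in *.
  set (B := norm_inf1 k d Wstar) in *.
  destruct Hout as [Ws [Is [rs [H0 [HI0 [Hstep HW]]]]]]. subst W.
  assert (HB : 0 <= B) by (apply rsum_nonneg; intros; apply col_inf_nonneg).
  assert (HSk : forall ex, In ex S -> (snd ex < k)%nat) by (intros; apply HS; auto).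
  assert (Hx : forall ex r, In ex S -> (r < d)%nat -> Rabs (fst ex r) <= 1)
    by (intros ex r Hin Hr; apply Rabs_le; apply (proj2 (HS ex Hin)); auto).
  assert (Hsup : forall t, (t <= T)%nat -> supported_on k d (Is t) (Ws t)).
  { intros [|t] Ht.
    - rewrite H0. intros j i _ _ _. auto.
    - destruct (Hstep t ltac:(lia)) as [G [_ [_ [_ [_ [Hs _]]]]]]. auto. }
  (* first order condition *)
  assert (Hfoc : forall t, (t <= T)%nat -> forall j i, (j < k)%nat -> (i < d)%nat -> Is t i ->
              Gf k d S (Ws t) j i = 0).
  { intros [|t] Ht j i Hj Hi HIi.
    - exfalso; apply (HI0 i HIi).
    - destruct (Hstep t ltac:(lia)) as [G [_ [_ [_ [HIs [Hs Hmin]]]]]].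
      apply foc_alg. intros h Hh.
      assert (Hmh := Hmin (madd (Ws (Datatypes.S t)) (Emat j i h))).
      assert (Hup := Lrisk_upper k d S (Ws (Datatypes.S t)) (Emat j i h) (Rabs h)
                    ltac:(intros ex Hin; split; [auto| intros; apply matvec_E; auto])
                    (Rabs_pos h) ltac:(apply Rabs_le; lra)).
      rewrite inner_E in Hup by auto.
      assert (Rabs h * Rabs h = h * h) by (rewrite <- Rabs_mult; apply Rabs_right; nra).
      assert (Lrisk k d S (Ws (Datatypes.S t)) <= Lrisk k d S (madd (Ws (Datatypes.S t)) (Emat j i h))).
      { apply Hmh. intros j' i' Hj' Hi' Hn. unfold madd, Emat.
        rewrite (Hs j' i' Hj' Hi' Hn). destruct (Nat.eqb_spec i' i); [subst; contradiction|].
        rewrite Bool.andb_false_r. ring. }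
      nra. }
  assert (Hin0 : forall t, (t <= T)%nat -> inner k d (Gf k d S (Ws t)) (Ws t) = 0).
  { intros t Ht. unfold inner. apply rsum_zero. intros j Hj. apply rsum_zero. intros i Hi.
    destruct (classic (Is t i)) as [HIi|HIi].
    - rewrite (Hfoc t Ht j i Hj Hi HIi). ring.
    - rewrite (Hsup t Ht j i Hj Hi HIi). ring. }
  (* convexity *)
  assert (Hconv : forall t, (t <= T)%nat -> forall M, (forall r, (r < d)%nat -> col_l1 k (Gf k d S (Ws t)) r <= M) ->
            Lrisk k d S (Ws t) - Lrisk k d S Wstar <= M * B).
  { intros t Ht M HM.
    assert (Hl := Lrisk_lower k d S (Ws t) (fun a b => Wstar a b - Ws t a b) HSk).
    rewrite (Lrisk_ext k d S (madd (Ws t) (fun a b => Wstar a b - Ws t a b)) Wstar) in Hl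
      by (intros; unfold madd; ring).
    assert (Hie : inner k d (Gf k d S (Ws t)) (fun a b => Wstar a b - Ws t a b)
                  = inner k d (Gf k d S (Ws t)) Wstar - inner k d (Gf k d S (Ws t)) (Ws t)).
    { unfold inner. rewrite <- rsum_minus. apply rsum_ext. intros. rewrite <- rsum_minus.
      apply rsum_ext. intros. ring. }
    rewrite Hie, Hin0 in Hl by auto.
    assert (Hb := inner_bound k d (Gf k d S (Ws t)) Wstar M HM). fold B in Hb.
    apply Rabs_le_both in Hb. lra. }
  assert (Hgid : forall t, (t < T)%nat -> forall G, is_gradient k d (Lrisk k d S) (Ws t) G ->
            forall j r, (j < k)%nat -> (r < d)%nat -> G j r = Gf k d S (Ws t) j r).
  { intros t Ht G HG j r Hj Hr.
    apply (deriv_sandwich (fun h => Lrisk k d S (madd (Ws t) (Emat j r h)))).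
    - exact (HG j r Hj Hr).
    - intros h Hh.
      rewrite (Lrisk_ext k d S (madd (Ws t) (Emat j r 0)) (Ws t))
        by (intros a b; unfold madd, Emat; destruct andb; ring).
      assert (Hl := Lrisk_lower k d S (Ws t) (Emat j r h) HSk).
      assert (Hup := Lrisk_upper k d S (Ws t) (Emat j r h) h
                    ltac:(intros ex Hin; split; [auto| intros; eapply Rle_trans; [apply matvec_E; auto| rewrite Rabs_right; lra]])
                    ltac:(lra) ltac:(lra)).
      rewrite inner_E in Hl, Hup by auto.
      lra. }
  assert (Hdesc : forall t, (t < T)%nat -> exists M, 0 <= M /\
             Lrisk k d S (Ws t) - Lrisk k d S Wstar <= M * B /\
             Lrisk k d S (Ws (Datatypes.S t)) - Lrisk k d S Wstar
               <= Lrisk k d S (Ws t) - Lrisk k d S Wstar - M * M / 4).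
  { intros t Ht.
    destruct (Hstep t Ht) as [G [HG [Hr [Hmax [HIs [Hs Hmin]]]]]].
    set (r := rs t) in *.
    set (g := Gf k d S (Ws t)).
    set (M := col_l1 k g r).
    assert (HGg : forall r', (r' < d)%nat -> col_l1 k G r' = col_l1 k g r').
    { intros r' Hr'. unfold col_l1. apply rsum_ext. intros j Hj. rewrite (Hgid t Ht G HG j r' Hj Hr'). auto. }
    assert (HM0 : 0 <= M) by (apply rsum_nonneg; intros; apply Rabs_pos).
    assert (HM2 : M <= 2) by (apply Gf_bound; auto).
    exists M. split; auto. split.
    - apply Hconv; [lia|]. intros r' Hr'. rewrite <- HGg by auto. unfold M. rewrite <- HGg by auto. apply Hmax; auto.
    - set (eta := M / 2).
      set (v := fun a => - eta * sgn (g a r)).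
      assert (Hup := Lrisk_upper k d S (Ws t) (Dcol r v) eta
                    ltac:(intros ex Hin; split; [auto| intros a Ha; rewrite matvec_Dcol by auto;
                          unfold v; rewrite !Rabs_mult, sgn_abs, Rabs_Ropp, Rabs_right by (unfold eta; lra);
                          assert (Rabs (fst ex r) <= 1) by auto; unfold eta; nra])
                    ltac:(unfold eta; lra) ltac:(unfold eta; lra)).
      rewrite inner_Dcol in Hup by auto.
      rewrite (rsum_ext k (fun a => Gf k d S (Ws t) a r * v a) (fun a => (- eta) * Rabs (g a r))) in Hup
        by (intros a _; unfold v, g; rewrite <- sgn_mul; ring).
      rewrite rsum_scal in Hup. fold g in Hup.
      change (rsum k (fun a => Rabs (g a r))) with M in Hup.
      assert (Lrisk k d S (Ws (Datatypes.S t)) <= Lrisk k d S (madd (Ws t) (Dcol r v))).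
      { apply Hmin. intros j' i' Hj' Hi' Hn. unfold madd, Dcol.
        assert (~ Is t i' /\ i' <> r) by (split; intro; apply Hn, HIs; auto).
        rewrite (Hsup t ltac:(lia) j' i' Hj' Hi' ltac:(tauto)).
        destruct (Nat.eqb_spec i' r); [tauto| ring]. }
      unfold eta in Hup. nra. }
  split.
  -
    unfold norm_inf0.
    assert (HIsR : forall t, (t <= T)%nat -> forall i, Is t i -> exists s, (s < t)%nat /\ rs s = i).
    { induction t; intros Ht i HIi.
      - exfalso; apply (HI0 i HIi).
      - destruct (Hstep t ltac:(lia)) as [G [_ [_ [_ [HIs _]]]]].
        apply HIs in HIi. destruct HIi as [HIi|HIi].
        + destruct (IHt ltac:(lia) i HIi) as [s [Hs1 Hs2]]. exists s; split; auto.
        + exists t; split; auto. }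
    apply count_bound with (f := rs). intros i Hi Hpos.
    destruct (classic (Is T i)) as [HIi|HIi].
    + apply (HIsR T ltac:(lia) i HIi).
    + exfalso. unfold col_inf in Hpos. rewrite (rmaxn_zero k (fun j => Rabs (Ws T j i))) in Hpos; [lra|].
      intros j Hj. rewrite (Hsup T ltac:(lia) j i Hj Hi HIi). apply Rabs_R0.
  -
    assert (Hrec := recur (fun t => Lrisk k d S (Ws t) - Lrisk k d S Wstar) B T HB Hdesc T ltac:(lia)).
    simpl in Hrec.
    assert (Hc := ceil_ge (4 / eps * B ^ 2)). fold T in Hc.
    destruct (Rle_lt_dec (Lrisk k d S (Ws T) - Lrisk k d S Wstar) 0) as [Hn|Hp]; [lra|].
    destruct T as [|T'] eqn:ET.
    + exfalso. simpl in Hc.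
      assert (HB0 : B = 0).
      { assert (0 <= 4 / eps * B ^ 2) by (apply Rmult_le_pos; [unfold Rdiv; apply Rmult_le_pos; [lra| left; apply Rinv_0_lt_compat; auto]| apply pow2_ge_0]).
        assert (HB2 : B ^ 2 = 0).
        { assert (Hq : 4 / eps * B ^ 2 = 0) by lra. apply Rmult_integral in Hq. destruct Hq as [Hq|Hq]; auto.
          exfalso. unfold Rdiv in Hq. assert (0 < / eps) by (apply Rinv_0_lt_compat; auto). nra. }
        simpl in HB2. nra. }
      assert (Hc0 := Hconv 0%nat ltac:(lia) 2 ltac:(intros; apply Gf_bound; auto)).
      rewrite HB0 in Hc0. lra.
    + rewrite <- ET in *.
      assert (HTp : 0 < INR T) by (rewrite ET; apply lt_0_INR; lia).
      assert (Hc2 : 4 * (B * B) <= eps * INR T).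
      { replace (4 * (B * B)) with (eps * (4 / eps * B ^ 2)) by (field; lra).
        apply Rmult_le_compat_l; lra. }
      assert (Hf : INR T * (Lrisk k d S (Ws T) - Lrisk k d S Wstar) <= INR T * eps) by lra.
      apply Rmult_le_reg_l in Hf; auto. lra.
Qed.
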